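(* Let $L$ be a finite-dimensional semisimple Leibniz algebra over $\mathbb{C}$ with a decomposition $L=(\oplus_{i=1}^m\mathfrak{g}_i)\ltimes(\oplus_{k=1}^n I_k)$, where $\mathfrak{g}_1,\dots,\mathfrak{g}_m$ are simple Lie subalgebras whose direct sum is a subalgebra complementary to $I$, and $I=\oplus_{k=1}^n I_k$ is a decomposition into simple $(\oplus_{i=1}^m\mathfrak{g}_i)$-submodules. Let $\Gamma$ be the graph with vertex set $\{\mathfrak{g}_1,\dots,\mathfrak{g}_m\}$ in which distinct $\mathfrak{g}_i,\mathfrak{g}_j$ are joined by an edge if and only if there exists $k$ with $[I_k,\mathfrak{g}_i]=I_k=[I_k,\mathfrak{g}_j]$. Let $\mathrm{B}\Gamma$ be the bipartite graph with vertex classes $\{I_1,\dots,I_n\}$ and $\{\mathfrak{g}_1,\dots,\mathfrak{g}_m\}$, where $I_k$ and $\mathfrak{g}_i$ are joined if and only if $[I_k,\mathfrak{g}_i]=I_k$. Then the following are equivalent: (i) $[I_k,\oplus_{i=1}^m\mathfrak{g}_i]=I_k$ for all $k=1,\dots,n$, and $\Gamma$ is connected; (ii) $\mathrm{B}\Gamma$ is connected.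
   Context: A Leibniz algebra is a vector space $L$ with a bilinear bracket satisfying $[[x,y],z]=[[x,z],y]+[x,[y,z]]$. The subspace $I=\mathrm{Span}\langle [x,x]\mid x\in L\rangle$ is an ideal with $[L,I]=0$, $\mathfrak{g}_L=L/I$ is a Lie algebra, and $L$ is semisimple if $\mathfrak{g}_L$ is semisimple; then $L$ has a subalgebra isomorphic to $\mathfrak{g}_L$ complementary to $I$, and $I$ is a module over it via $i.g=[i,g]$. For each $k,i$ one has $[I_k,\mathfrak{g}_i]\in\{I_k,\{0\}\}$. *)

(* Defs.v *)
From HB Require Import structures.
From mathcomp Require Import all_boot all_order all_algebra.
From mathcomp Require Export complex.
From mathcomp Require Export reals.

Set Implicit Arguments.
Unset Strict Implicit.
Unset Printing Implicit Defensive.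

Import GRing.Theory.
Local Open Scope ring_scope.

(* A finite-dimensional algebra is a vectType L over a field K together with
   a bracket br : L -> L -> L. *)
Section LeibnizDefs.

Variables (K : fieldType) (L : vectType K) (br : L -> L -> L).

Definition bilinear_bracket : Prop :=
  (forall (a : K) (x y z : L), br (a *: x + y) z = a *: br x z + br y z) /\
  (forall (a : K) (x y z : L), br x (a *: y + z) = a *: br x y + br x z).

Definition leibniz_identity : Prop :=
  forall x y z : L, br (br x y) z = br (br x z) y + br x (br y z).

(* [U,V] : the subspace spanned by all brackets [u,v], u in U, v in V
   (by bilinearity it is spanned by brackets of basis vectors) *)
Definition brv (U V : {vspace L}) : {vspace L} :=
  (\sum_(u <- vbasis U) \sum_(v <- vbasis V) <[br u v]>)%VS.

Definition is_square_span (J : {vspace L}) : Prop :=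
  (forall x : L, br x x \in J) /\
  (forall U : {vspace L}, (forall x : L, br x x \in U) -> (J <= U)%VS).

(* S is a simple Lie subalgebra of L: closed under the bracket, the restricted
   bracket is alternating (hence, with the Leibniz identity, a Lie bracket),
   S is non-abelian and has no ideals other than 0 and S. *)
Definition simple_Lie_subalgebra (S : {vspace L}) : Prop :=
  [/\ (brv S S <= S)%VS,
      {in S, forall x, br x x = 0},
      brv S S != 0%VS &
      forall J : {vspace L}, (J <= S)%VS -> (brv J S <= J)%VS ->
        J = 0%VS \/ J = S].

(* W is a simple submodule for the subalgebra G, under the action w.g = [w,g] *)
Definition simple_submodule (G W : {vspace L}) : Prop :=
  [/\ W != 0%VS,
      (brv W G <= W)%VS &
      forall U : {vspace L}, (U <= W)%VS -> (brv U G <= U)%VS ->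
        U = 0%VS \/ U = W].

Definition gamma_rel (m n : nat) (g : 'I_m -> {vspace L})
    (I : 'I_n -> {vspace L}) : rel 'I_m :=
  fun i j => (i != j) &&
    [exists k, (brv (I k) (g i) == I k) && (brv (I k) (g j) == I k)].

Definition bgamma_rel (m n : nat) (g : 'I_m -> {vspace L})
    (I : 'I_n -> {vspace L}) : rel ('I_n + 'I_m) :=
  fun u v => match u, v with
  | inl k, inr i => brv (I k) (g i) == I k
  | inr i, inl k => brv (I k) (g i) == I k
  | _, _ => false
  end.

End LeibnizDefs.

Definition graph_connected (T : finType) (e : rel T) : Prop :=
  forall x y : T, connect e x y.

(* Main.v *)
Require Import Defs.
From HB Require Import structures.
From mathcomp Require Import all_boot all_order all_algebra.
From mathcomp Require Import complex reals.
Import GRing.Theory.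
Local Open Scope ring_scope.

Section Aux.
Local Set Implicit Arguments.
Variables (K : fieldType) (L : vectType K) (br : L -> L -> L).
Hypothesis Hbl : bilinear_bracket br.

Definition prelin (f : L -> L) := forall a x y, f (a *: x + y) = a *: f x + f y.

Lemma prelin0 f : prelin f -> f 0 = 0.
Proof.
move=> H; have := H 1 0 0; rewrite !scale1r add0r => h.
have : f 0 + f 0 - f 0 = f 0 - f 0 by rewrite -h.
by rewrite addrK subrr.
Qed.

Lemma prelinD f x y : prelin f -> f (x + y) = f x + f y.
Proof. by move=> H; have := H 1 x y; rewrite !scale1r. Qed.

Lemma prelinZ f a x : prelin f -> f (a *: x) = a *: f x.
Proof. by move=> H; have := H a x 0; rewrite (prelin0 H) !addr0. Qed.

Lemma prelin_sum (T : eqType) (s : seq T) (Vs : T -> {vspace L}) f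
   (Y : {vspace L}) :
  prelin f -> (forall x, x \in s -> forall z, z \in Vs x -> f z \in Y) ->
  forall z, z \in (\sum_(x <- s) Vs x)%VS -> f z \in Y.
Proof.
move=> hf; elim: s => [|x s IH] H z.
  by rewrite big_nil memv0 => /eqP ->; rewrite prelin0 // mem0v.
rewrite big_cons => /memv_addP [u hu [v hv ->]].
rewrite prelinD //; apply: memvD.
  by apply: (H x) => //; rewrite mem_head.
by apply: IH => // y hy; apply: H; rewrite in_cons hy orbT.
Qed.

Lemma prelin_span f (U Y : {vspace L}) : prelin f ->
  (forall b, b \in vbasis U -> f b \in Y) -> forall u, u \in U -> f u \in Y.
Proof.
move=> hf H u; rewrite -{1}(span_basis (vbasisP U)) span_def.
apply: prelin_sum => // b hb z /vlineP[c ->].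
rewrite prelinZ // rpredZ //; exact: H.
Qed.

Lemma prelin_brv f (U V Y : {vspace L}) : prelin f ->
  (forall u v, u \in U -> v \in V -> f (br u v) \in Y) ->
  forall z, z \in brv br U V -> f z \in Y.
Proof.
move=> hf H z; rewrite /brv.
apply: prelin_sum => // u hu; apply: prelin_sum => // v hv z' /vlineP[c ->].
rewrite prelinZ // rpredZ //; apply: H; exact: vbasis_mem.
Qed.


Lemma prelin_l z : prelin (fun x => br x z).
Proof. by case: Hbl => h _ a x y; apply: h. Qed.

Lemma prelin_r x : prelin (br x).
Proof. by case: Hbl => _ h a y z; apply: h. Qed.

Lemma brZl a x z : br (a *: x) z = a *: br x z.
Proof. exact: (prelinZ _ _ (prelin_l z)). Qed.
Lemma brZr a x z : br x (a *: z) = a *: br x z.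
Proof. exact: (prelinZ _ _ (prelin_r x)). Qed.
Lemma br0r x : br x 0 = 0.
Proof. exact: (prelin0 (prelin_r x)). Qed.

Lemma sub_seqsum (T : eqType) (s : seq T) (Vs : T -> {vspace L}) x :
  x \in s -> (Vs x <= \sum_(y <- s) Vs y)%VS.
Proof. by move=> hx; rewrite (big_rem x) //= addvSl. Qed.

Lemma memv_brv u v (U V : {vspace L}) : u \in U -> v \in V -> br u v \in brv br U V.
Proof.
move=> hu hv.
apply: (@prelin_span (fun x => br x v) U _ (prelin_l v) _ u hu).
move=> b hb; apply: (@prelin_span (br b) V _ (prelin_r b) _ v hv).
move=> c hc; rewrite /brv.
apply: (subvP (@sub_seqsum _ _ (fun u => \sum_(v <- vbasis V) <[br u v]>)%VS b hb)).
apply: (subvP (@sub_seqsum _ _ (fun v => <[br b v]>)%VS c hc)).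
exact: memv_line.
Qed.

Lemma brv_subP (U V W : {vspace L}) :
  reflect (forall u v, u \in U -> v \in V -> br u v \in W) (brv br U V <= W)%VS.
Proof.
apply: (iffP idP).
  by move=> h u v hu hv; apply: (subvP h); apply: memv_brv.
move=> h; apply/subvP => z; exact: (@prelin_brv id U V W (fun a x y => erefl)).
Qed.

Lemma brv_mono (U U' V V' : {vspace L}) : (U <= U')%VS -> (V <= V')%VS ->
  (brv br U V <= brv br U' V')%VS.
Proof.
move=> hU hV; apply/brv_subP => u v hu hv; apply: memv_brv.
  exact: (subvP hU). exact: (subvP hV).
Qed.

Lemma brv0 (U : {vspace L}) : brv br U 0%VS = 0%VS.
Proof.
apply/eqP; rewrite -subv0; apply/brv_subP => u v _.
by rewrite memv0 => /eqP ->; rewrite br0r mem0v.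
Qed.

Lemma brv_sum m (U : {vspace L}) (g : 'I_m -> {vspace L}) :
  (brv br U (\sum_i g i) <= \sum_i brv br U (g i))%VS.
Proof.
apply/brv_subP => u v hu.
apply: (@prelin_sum _ _ _ (br u) _ (prelin_r u)) => // i _ z hz.
apply: (subvP (sumv_sup i _ (subvv _))) => //; exact: memv_brv.
Qed.

End Aux.
Arguments prelin_sum {K L T s Vs} f {Y}.
Arguments prelin_span {K L} f {U Y}.
Arguments prelin_brv {K L br} f {U V Y}.
Arguments brv_subP {K L br} Hbl {U V W}.

Theorem corollary3p6 (R : realType) (L : vectType R[i]) (br : L -> L -> L)
    (m n : nat) (g : 'I_m -> {vspace L}) (I : 'I_n -> {vspace L}) :
  bilinear_bracket br ->
  leibniz_identity br ->
  (forall i, simple_Lie_subalgebra br (g i)) ->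
  (forall i j, i != j -> brv br (g i) (g j) = 0%VS) ->
  directv (\sum_i g i) ->
  directv (\sum_k I k) ->
  is_square_span br (\sum_k I k)%VS ->
  ((\sum_i g i) :&: (\sum_k I k))%VS = 0%VS ->
  ((\sum_i g i) + (\sum_k I k))%VS = fullv ->
  (forall k, simple_submodule br (\sum_i g i)%VS (I k)) ->
  ((forall k, brv br (I k) (\sum_i g i)%VS = I k) /\
     graph_connected (gamma_rel br g I))
  <-> graph_connected (bgamma_rel br g I).
Proof.
move=> Hbl Hleib Hg Hgg _ _ Hsq _ Hfull Hsimp.
set G := (\sum_i g i)%VS.
have dich : forall k i, brv br (I k) (g i) = 0%VS \/ brv br (I k) (g i) = I k.
  move=> k i; case: (Hsimp k) => nz stab simp; apply: simp.
    apply: subv_trans _ stab; apply: (brv_mono Hbl) => //; exact: (sumv_sup i).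
  apply/(brv_subP Hbl) => z y hz hy.
  apply: (prelin_brv (fun z => br z y)) hz => [|w x hw hx].
    exact: (prelin_l Hbl).
  apply: (prelin_sum (br (br w x))) hy => [|j _ y' hy'].
    exact: (prelin_r Hbl).
  rewrite Hleib; apply: memvD.
    apply: (memv_brv Hbl) => //; apply: (subvP stab); apply: (memv_brv Hbl) => //.
    exact: (subvP (sumv_sup j _ (subvv _))).
  case: (eqVneq i j) hy' => [<- | ne] hy'.
    apply: (memv_brv Hbl) => //; case: (Hg i) => hgi _ _ _.
    by apply: (subvP hgi); apply: (memv_brv Hbl).
  have := memv_brv Hbl hx hy'; rewrite Hgg // memv0 => /eqP ->.
  by rewrite (br0r Hbl) // mem0v.
have exi : forall k, brv br (I k) G = I k -> exists i, brv br (I k) (g i) = I k.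
  move=> k hk.
  case: (pickP (fun i => brv br (I k) (g i) == I k)) => [i /eqP hi | none].
    by exists i.
  exfalso; case: (Hsimp k) => nz _ _.
  have : (I k <= 0)%VS.
    rewrite -{1}hk; apply: subv_trans (brv_sum Hbl _ _) _.
    apply/subv_sumP => i _; case: (dich k i) => h; first by rewrite h sub0v.
    by move: (none i); rewrite /= h eqxx.
  by rewrite subv0 (negbTE nz).
have back : forall k i, brv br (I k) (g i) = I k -> brv br (I k) G = I k.
  move=> k i hi; case: (Hsimp k) => _ stab _.
  apply/eqP; rewrite eqEsubv stab /=; rewrite -{1}hi.
  apply: (brv_mono Hbl) => //; exact: (sumv_sup i).
split.
- case=> hall hconn x y.
  set e := bgamma_rel br g I.
  have toR : forall x, exists i, connect e x (inr i) /\ connect e (inr i) x.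
    case=> [k|i]; last by exists i; split; apply: connect0.
    have [i hi] := exi k (hall k).
    by exists i; split; apply: connect1; rewrite /e /= hi eqxx.
  have liftc : forall i j, connect (gamma_rel br g I) i j ->
      connect e (inr i) (inr j).
    move=> i j /connectP [p hp ->]; elim: p i hp => [|a p IH] i /=.
      by move=> _; apply: connect0.
    case/andP => hia hp; apply: connect_trans (IH _ hp).
    move: hia; rewrite /gamma_rel => /andP [_ /existsP [k /andP [h1 h2]]].
    by apply: (connect_trans (y := inl k)); apply: connect1.
  have [a [xa _]] := toR x; have [b [_ yb]] := toR y.
  exact: connect_trans xa (connect_trans (liftc a b (hconn a b)) yb).
- move=> hB.
  set e := bgamma_rel br g I.
  have hk : forall k, exists i, brv br (I k) (g i) = I k.
    move=> k; case: (pickP (fun t : 'I_n + 'I_m => t != inl k)) => [t ht | none].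
      have /connectP [p hp hlast] := hB (inl k) t.
      case: p hp hlast => [|w p] /=.
        by move=> _ ht'; rewrite ht' eqxx in ht.
      case/andP => hw _ _; case: w hw => [k'|i] //= /eqP hi; by exists i.
    exfalso.
    have hG : G = 0%VS.
      rewrite /G big1 // => i _; by move: (none (inr i)).
    have hI : (\sum_k' I k')%VS = I k.
      rewrite (bigD1 k) //= big1 ?addv0 // => k' hk'.
      by move: (none (inl k')); rewrite /= hk'.
    move: Hfull; rewrite -/G hG add0v hI => hIf.
    case: (Hsimp k) => nz stab simp.
    set v := vpick (I k).
    have vnz : v != 0 by rewrite vpick0.
    have hv : <[v]>%VS = I k.
      case: (simp <[v]>%VS) => //.
        by rewrite -memvE memv_pick.
        by rewrite -/G hG (brv0 Hbl) // sub0v.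
      by move/eqP; rewrite -subv0 -memvE memv0 (negbTE vnz).
    have all : forall x, exists c, x = c *: v.
      by move=> x; apply/vlineP; rewrite hv hIf memvf.
    have [a ha] := all (br v v).
    have := Hleib v v v; rewrite -{1}[br (br v v) v]addr0 => /addrI h0.
    rewrite ha (brZr Hbl) // ha scalerA in h0.
    have a0 : a = 0.
      move/esym/eqP: h0; rewrite scaler_eq0 (negbTE vnz) orbF mulf_eq0.
      by case/orP => /eqP.
    have sq : forall x, br x x = 0.
      move=> x; have [c ->] := all x.
      by rewrite (brZl Hbl) // (brZr Hbl) // ha a0 scale0r !scaler0.
    case: Hsq => _ min.
    have := min 0%VS (fun x => etrans (congr1 (fun t => t \in 0%VS) (sq x)) (mem0v _)).
    by rewrite hI subv0 (negbTE nz).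
  split.
    by move=> k; have [i hi] := hk k; exact: back k i hi.
  pose adm u i := match u with inr i' => i == i' | inl k => e (inl k) (inr i) end.
  have key : forall p u, path e u p -> forall i, adm u i -> forall j,
      last u p = inr j -> connect (gamma_rel br g I) i j.
    elim=> [|w p IH] u /=.
      move=> _ i; case: u => [k|i'] /=; first by [].
      by move=> /eqP -> j [->]; apply: connect0.
    case/andP => huw hp i hadm j hl.
    case: u huw hadm => [k|i'] /=.
      case: w hp hl => [k'|i2] //= hp hl huw hki.
      apply: connect_trans (IH _ hp i2 _ j hl) => //=.
      case: (eqVneq i i2) => [-> | ne]; first exact: connect0.
      apply: connect1; rewrite /gamma_rel ne /=; apply/existsP; exists k.
      by rewrite hki.
    case: w hp hl => [k'|i2] //= hp hl huw /eqP ->.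
    exact: (IH _ hp).
  move=> i j; have /connectP [p hp hl] := hB (inr i) (inr j).
  by apply: (key p (inr i)) => //=; rewrite eqxx.
Qed.
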